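(* Fix any total budget $\mathrm{TB}\in\mathbb N_0$. For all integers $n,m\in\mathbb Z$, the disjunctive sum of the integer game forms $(n)+(m)$ equals the integer game form $(n+m)$.
   Context: Game forms are defined recursively: $G=\{G^{\mathcal L}\mid G^{\mathcal R}\}$ with finite sets of Left and Right options, and finite birthday. Integer game forms: $(0)=\{\varnothing\mid\varnothing\}$; for $n\in\mathbb N$, $(n)=\{(n-1)\mid\varnothing\}$ and $(-n)=\overline{(n)}=\{\varnothing\mid(-(n-1))\}$, where the conjugate is $\bar G=\{\overline{G^{\mathcal R}}\mid\overline{G^{\mathcal L}}\}$. The budget set for total budget $\mathrm{TB}$ is $\mathcal B=\{0,\dots,\mathrm{TB},\hat 0,\dots,\widehat{\mathrm{TB}}\}$: state $p$ (resp. $\hat p$) means Left holds $p$ dollars and Right holds $\mathrm{TB}-p$, and Right (resp. Left) holds the tie-breaking marker. Play of $(G,\tilde p)$: at every position (terminal ones included) both players bid simultaneously, Left $\ell\in\{0,\dots,p\}$, Right $r\in\{0,\dots,\mathrm{TB}-p\}$. If Left holds the marker (state $\hat p$): if $\ell>r$ Left moves to $(G^L,\widehat{p-\ell})$, or, including the marker (allowed when $\ell\ge r$), to $(G^L,p-\ell)$; if $\ell=r$ Left wins, the marker passes to Right, play continues at $(G^L,p-\ell)$; if $\ell<r$ Right moves to $(G^R,\widehat{p+r})$. Symmetrically when Right holds the marker (state $p$): if $r>\ell$ Right moves to $(G^R,p+r)$ or, including the marker, to $(G^R,\widehat{p+r})$; if $r=\ell$ Right wins, the marker passes to Left, play continues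 at $(G^R,\widehat{p+r})$; if $r<\ell$ Left moves to $(G^L,p-\ell)$. A player who wins a bid but has no option loses. $o(G,\tilde p)\in\{\mathrm L,\mathrm R\}$ is the winner under optimal play; $\mathrm L>\mathrm R$. Disjunctive sum $G+H=\{G^{\mathcal L}+H,G+H^{\mathcal L}\mid G^{\mathcal R}+H,G+H^{\mathcal R}\}$. $G\ge H$ means $o(G+X,\tilde p)\ge o(H+X,\tilde p)$ for all game forms $X$ and all $\tilde p\in\mathcal B$; $G=H$ means $G\ge H$ and $H\ge G$. *)

(* Defs.v *)
From mathcomp Require Import all_boot all_algebra.
Set Implicit Arguments. Unset Strict Implicit. Unset Printing Implicit Defensive.

(* Game forms: finite lists of Left and Right options; finite birthday is
   automatic since the type is inductive. *)
Inductive game : Type := Game : seq game -> seq game -> game.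

Definition leftOpts (G : game) : seq game := let: Game l _ := G in l.
Definition rightOpts (G : game) : seq game := let: Game _ r := G in r.

Fixpoint conjg (G : game) : game :=
  match G with Game l r => Game (map conjg r) (map conjg l) end.

Fixpoint gsum (G : game) : game -> game :=
  fix gsumG (H : game) : game :=
    match G, H with
    | Game gl gr, Game hl hr =>
        Game (map (fun g => gsum g H) gl ++ map gsumG hl)
             (map (fun g => gsum g H) gr ++ map gsumG hr)
    end.

Fixpoint nat_game (n : nat) : game :=
  match n with 0 => Game [::] [::] | n'.+1 => Game [:: nat_game n'] [::] end.

Definition int_game (z : int) : game :=
  match z with Posz n => nat_game n | Negz n => conjg (nat_game n.+1) end.

(* Budget state: [p] = Left's dollars (Right holds TB - p); [lm] = true means
   Left holds the tie-breaking marker (the hatted state \hat p),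
   false means Right holds it (state p). *)

(* Outcome: true = L (Left wins), false = R.  Left wins iff Left has a bid
   such that, for every Right bid, the resolution leads to a Left win, where
   the bid winner picks (optimally) an option and, when allowed, whether to
   hand over the marker.  A bid winner without options loses. *)
Fixpoint outcome (TB : nat) (G : game) (p : nat) (lm : bool) {struct G} : bool :=
  match G with
  | Game gl gr =>
    let oL := fun (p' : nat) (lm' : bool) => has (fun g => outcome TB g p' lm') gl in
    let oR := fun (p' : nat) (lm' : bool) => all (fun g => outcome TB g p' lm') gr in
    has (fun l =>
      all (fun r =>
        if lm then
          if r < l then oL (p - l) true || oL (p - l) false
          else if l == r then oL (p - l) false
          else oR (p + r) true
        else
          if l < r then oR (p + r) false && oR (p + r) true
          else if l == r then oR (p + r) true
          else oL (p - l) false)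
        (iota 0 (TB - p).+1))
      (iota 0 p.+1)
  end.

(* Order on outcomes: L > R, i.e. implication on booleans. *)
Definition game_ge (TB : nat) (G H : game) : Prop :=
  forall (X : game) (p : nat) (lm : bool), p <= TB ->
    (outcome TB (gsum H X) p lm ==> outcome TB (gsum G X) p lm).

Definition game_eq (TB : nat) (G H : game) : Prop :=
  game_ge TB G H /\ game_ge TB H G.

(* Main.v *)
Require Import Defs.
From mathcomp Require Import all_boot all_algebra.
From mathcomp Require Import zify.
Set Implicit Arguments. Unset Strict Implicit. Unset Printing Implicit Defensive.

Definition stepb (oL oR : nat -> bool -> bool) (p : nat) (lm : bool) (l r : nat) : bool :=
  if lm then
    if r < l then oL (p - l) true || oL (p - l) false
    else if l == r then oL (p - l) false
    else oR (p + r) true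
  else
    if l < r then oR (p + r) false && oR (p + r) true
    else if l == r then oR (p + r) true
    else oL (p - l) false.

Definition F (TB : nat) (oL oR : nat -> bool -> bool) (p : nat) (lm : bool) : bool :=
  has (fun l => all (fun r => stepb oL oR p lm l r) (iota 0 (TB - p).+1)) (iota 0 p.+1).

Definition oLs TB (gl : seq game) p lm := has (fun g => outcome TB g p lm) gl.
Definition oRs TB (gr : seq game) p lm := all (fun g => outcome TB g p lm) gr.

Lemma out_F TB gl gr p lm :
  outcome TB (Game gl gr) p lm = F TB (oLs TB gl) (oRs TB gr) p lm.
Proof. by []. Qed.

Lemma gsum_unfold gl gr hl hr :
  gsum (Game gl gr) (Game hl hr) =
  Game (map (fun g => gsum g (Game hl hr)) gl ++ map (fun h => gsum (Game gl gr) h) hl)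
       (map (fun g => gsum g (Game hl hr)) gr ++ map (fun h => gsum (Game gl gr) h) hr).
Proof. by []. Qed.

Lemma FP TB oL oR p lm :
  reflect (exists2 l, l <= p & forall r, r <= TB - p -> stepb oL oR p lm l r)
          (F TB oL oR p lm).
Proof.
apply: (iffP hasP) => [[l] | [l hl H]].
  rewrite mem_iota add0n ltnS => hl /allP H; exists l => // r hr.
  by apply: H; rewrite mem_iota add0n ltnS.
exists l; first by rewrite mem_iota add0n ltnS.
by apply/allP => r; rewrite mem_iota add0n ltnS => /H.
Qed.


Lemma stF_lt (oL oR : nat -> bool -> bool) (p l r : nat) : l < r -> stepb oL oR p false l r = oR (p + r) false && oR (p + r) true.
Proof. by move=> h; rewrite /stepb h. Qed.
Lemma stF_eq (oL oR : nat -> bool -> bool) (p l r : nat) : l = r -> stepb oL oR p false l r = oR (p + r) true.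
Proof. by move=> <-; rewrite /stepb ltnn eqxx. Qed.
Lemma stF_gt (oL oR : nat -> bool -> bool) (p l r : nat) : r < l -> stepb oL oR p false l r = oL (p - l) false.
Proof. by move=> h; rewrite /stepb ltnNge (ltnW h) /= gtn_eqF. Qed.
Lemma stT_gt (oL oR : nat -> bool -> bool) (p l r : nat) : r < l -> stepb oL oR p true l r = oL (p - l) true || oL (p - l) false.
Proof. by move=> h; rewrite /stepb h. Qed.
Lemma stT_eq (oL oR : nat -> bool -> bool) (p l r : nat) : l = r -> stepb oL oR p true l r = oL (p - l) false.
Proof. by move=> <-; rewrite /stepb ltnn eqxx. Qed.
Lemma stT_lt (oL oR : nat -> bool -> bool) (p l r : nat) : l < r -> stepb oL oR p true l r = oR (p + r) true.
Proof. by move=> h; rewrite /stepb ltnNge (ltnW h) /= ltn_eqF. Qed.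


Lemma F_mono TB (oL1 oR1 oL2 oR2 : nat -> bool -> bool) p lm :
  (forall q m, q <= TB -> oL1 q m -> oL2 q m) ->
  (forall q m, q <= TB -> oR1 q m -> oR2 q m) ->
  p <= TB -> F TB oL1 oR1 p lm -> F TB oL2 oR2 p lm.
Proof.
move=> hL hR hp /FP [l hl H]; apply/FP; exists l => // r hr.
have hL' : forall m, oL1 (p - l) m -> oL2 (p - l) m by move=> m; apply: hL; lia.
have hR' : forall m, oR1 (p + r) m -> oR2 (p + r) m by move=> m; apply: hR; lia.
move: (H r hr); clear H; rewrite /stepb; case: lm; repeat case: ifP => _;
  first [ by case/orP => [/hL' -> | /hL' ->]; rewrite ?orbT
        | by case/andP => /hR' -> /hR' ->
        | exact: hL' | exact: hR' ].
Qed.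

Lemma has_In T (P : pred T) s : has P s <-> exists x, List.In x s /\ P x.
Proof.
elim: s => [|x s IH] /=; first by split => // [[x []]].
split.
  case/orP => [h | /IH [y [hy Py]]]; first by exists x; split => //; left.
  by exists y; split => //; right.
case=> y [[<- -> //| hy Py]]; apply/orP; right; apply/IH; by exists y.
Qed.

Lemma all_In T (P : pred T) s : all P s <-> forall x, List.In x s -> P x.
Proof.
elim: s => [|x s IH] //=.
split.
  case/andP => Px /IH H y [<- // | hy]; exact: H.
move=> H; apply/andP; split; first by apply: H; left.
by apply/IH => y hy; apply: H; right.
Qed.

Fixpoint gsize (G : game) : nat :=
  match G with Game l r => (sumn (map gsize l) + sumn (map gsize r)).+1 end.

Lemma gsize_in_sum (g : game) s : List.In g s -> gsize g <= sumn (map gsize s).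
Proof.
elim: s => [|x s IH] //= [<- | h]; first exact: leq_addr.
by apply: leq_trans (IH h) _; apply: leq_addl.
Qed.

Lemma gsizeL g l r : List.In g l -> gsize g < gsize (Game l r).
Proof. by move=> /gsize_in_sum h /=; rewrite ltnS; apply: leq_trans h (leq_addr _ _). Qed.
Lemma gsizeR g l r : List.In g r -> gsize g < gsize (Game l r).
Proof. by move=> /gsize_in_sum h /=; rewrite ltnS; apply: leq_trans h (leq_addl _ _). Qed.

Lemma nat_strong (P : nat -> Prop) :
  (forall n, (forall m, m < n -> P m) -> P n) -> forall n, P n.
Proof.
move=> H n; have: forall m, m <= n -> P m.
  elim: n => [|n IH] m hm.
    by apply: H => k; rewrite leqn0 in hm; rewrite (eqP hm).
  by apply: H => k hk; apply: IH; rewrite -ltnS (leq_trans hk hm).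
by apply.
Qed.

Lemma game_ind2 (P : game -> Prop) :
  (forall gl gr, (forall g, List.In g gl -> P g) -> (forall g, List.In g gr -> P g) ->
     P (Game gl gr)) -> forall G, P G.
Proof.
move=> H G; have: forall n, forall G, gsize G = n -> P G.
  elim/nat_strong => n IH [gl gr] e; apply: H => g hg; apply: (IH (gsize g)) => //.
    by rewrite -e; apply: gsizeL.
  by rewrite -e; apply: gsizeR.
by apply.
Qed.

Definition sle (p : nat) (lm : bool) (q : nat) (lm' : bool) : bool :=
  if lm == lm' then p <= q else lm && (p < q).

Lemma oLs_mono TB gl p lm q lm' :
  (forall g, List.In g gl -> outcome TB g p lm -> outcome TB g q lm') ->
  oLs TB gl p lm -> oLs TB gl q lm'.
Proof. by move=> H /has_In [g [hg h]]; apply/has_In; exists g; split => //; apply: H. Qed.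

Lemma oRs_mono TB gl p lm q lm' :
  (forall g, List.In g gl -> outcome TB g p lm -> outcome TB g q lm') ->
  oRs TB gl p lm -> oRs TB gl q lm'.
Proof. by move=> H /all_In h; apply/all_In => g hg; apply: H => //; apply: h. Qed.

Lemma Mono TB X : forall p lm q lm', sle p lm q lm' -> q <= TB ->
  outcome TB X p lm -> outcome TB X q lm'.
Proof.
elim/game_ind2: X => gl gr IHl IHr p lm q lm' hs hq.
have hL : forall a m b m', sle a m b m' -> b <= TB -> oLs TB gl a m -> oLs TB gl b m'.
  by move=> a m b m' h1 h2; apply: oLs_mono => g hg; apply: IHl.
have hR : forall a m b m', sle a m b m' -> b <= TB -> oRs TB gr a m -> oRs TB gr b m'.
  by move=> a m b m' h1 h2; apply: oRs_mono => g hg; apply: IHr.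
rewrite !out_F => /FP [l hl H]; apply/FP.
move: hs; rewrite /sle; case: lm H; case: lm' => H //= hpq;
  (exists l; first lia); move=> r hr; case: (ltngtP l r) => hlr.
- have := H (r + (q - p)) ltac:(lia); rewrite stT_lt; last lia.
  by have -> : p + (r + (q - p)) = q + r by lia.
- have := H r ltac:(lia); rewrite stT_gt //.
  by case/orP => h; apply/orP; [left|right]; apply: hL h; rewrite /sle /=; lia.
- have := H r ltac:(lia); rewrite stT_eq // => h; apply: hL h; rewrite /sle /=; lia.
- apply/andP; split.
    have := H (r + (q - p) - 1) ltac:(lia); rewrite stT_lt; last lia.
    move=> h; apply: hR h; rewrite /sle /=; lia.
  have := H (r + (q - p)) ltac:(lia); rewrite stT_lt; last lia.
  by have -> : p + (r + (q - p)) = q + r by lia.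
- have := H r ltac:(lia); rewrite stT_gt //.
  by case/orP => h; apply: hL h; rewrite /sle /=; lia.
- have := H (r + (q - p)) ltac:(lia); rewrite stT_lt; last lia.
  by have -> : p + (r + (q - p)) = q + r by lia.
- have := H (r + (q - p)) ltac:(lia); rewrite stF_lt; last lia.
  by have -> : p + (r + (q - p)) = q + r by lia.
- have := H 0 ltac:(lia); rewrite stF_gt; last lia.
  by move=> h; apply: hL h; rewrite /sle /=; lia.
- case: (ltngtP p q) hpq => // hpq' _.
    have := H (r + (q - p)) ltac:(lia); rewrite stF_lt; last lia.
    have -> : p + (r + (q - p)) = q + r by lia.
    by case/andP.
  by subst q; have := H r ltac:(lia); rewrite stF_eq.
Qed.

Definition gzero := Game [::] [::].
Definition gone := Game [:: gzero] [::].
Definition gmone := Game [::] [:: gzero].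

Lemma map_In_id (f : game -> game) s : (forall x, List.In x s -> f x = x) -> map f s = s.
Proof.
elim: s => [|x s IH] //= H; rewrite H; last by left.
by rewrite IH // => y hy; apply: H; right.
Qed.

Lemma gsum_0r G : gsum G gzero = G.
Proof.
elim/game_ind2: G => gl gr IHl IHr.
rewrite /gzero gsum_unfold /= !cats0 map_In_id // map_In_id //.
Qed.

Lemma oLs_cat TB (f : game -> game) s t p lm :
  oLs TB (map f s ++ t) p lm = has (fun g => outcome TB (f g) p lm) s || oLs TB t p lm.
Proof. by rewrite /oLs has_cat has_map. Qed.
Lemma oRs_cat TB (f : game -> game) s t p lm :
  oRs TB (map f s ++ t) p lm = all (fun g => outcome TB (f g) p lm) s && oRs TB t p lm.
Proof. by rewrite /oRs all_cat all_map. Qed.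

Lemma gsum_one gl gr : gsum (Game gl gr) gone =
  Game (map (fun g => gsum g gone) gl ++ [:: Game gl gr])
       (map (fun g => gsum g gone) gr ++ [::]).
Proof.
have e := gsum_0r (Game gl gr); rewrite /gzero gsum_unfold /= in e.
by rewrite /gone gsum_unfold /= e.
Qed.

Lemma gsum_mone gl gr : gsum (Game gl gr) gmone =
  Game (map (fun g => gsum g gmone) gl ++ [::])
       (map (fun g => gsum g gmone) gr ++ [:: Game gl gr]).
Proof.
have e := gsum_0r (Game gl gr); rewrite /gzero gsum_unfold /= in e.
by rewrite /gmone gsum_unfold /= e.
Qed.

Lemma oLs_Mono TB gl p lm q lm' : sle p lm q lm' -> q <= TB ->
  oLs TB gl p lm -> oLs TB gl q lm'.
Proof. by move=> h1 h2; apply: oLs_mono => g _; apply: Mono. Qed.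
Lemma oRs_Mono TB gl p lm q lm' : sle p lm q lm' -> q <= TB ->
  oRs TB gl p lm -> oRs TB gl q lm'.
Proof. by move=> h1 h2; apply: oRs_mono => g _; apply: Mono. Qed.

Lemma Dom TB Y p lm : p <= TB -> outcome TB Y p lm -> outcome TB (gsum Y gone) p lm.
Proof.
elim/game_ind2: Y p lm => gl gr IHl IHr p lm hp.
rewrite gsum_one !out_F; apply: F_mono => // q m hq.
  move=> /has_In [g [hg h]]; rewrite oLs_cat; apply/orP; left.
  by apply/has_In; exists g; split => //; apply: IHl.
rewrite oRs_cat /= andbT => /all_In h; apply/all_In => g hg; apply: IHr => //; exact: h.
Qed.

Lemma Dom' TB Y p lm : p <= TB -> outcome TB (gsum Y gmone) p lm -> outcome TB Y p lm.
Proof.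
elim/game_ind2: Y p lm => gl gr IHl IHr p lm hp.
rewrite gsum_mone !out_F; apply: F_mono => // q m hq.
  rewrite oLs_cat orbF => /has_In [g [hg h]].
  by apply/has_In; exists g; split => //; apply: IHl.
rewrite oRs_cat => /andP [/all_In h _]; apply/all_In => g hg; apply: IHr => //; exact: h.
Qed.

Lemma FnP TB oL oR p lm : ~~ F TB oL oR p lm ->
  forall l, l <= p -> exists2 r, r <= TB - p & ~~ stepb oL oR p lm l r.
Proof.
move=> hn l hl; case: (boolP (all (fun r => stepb oL oR p lm l r) (iota 0 (TB - p).+1))).
  move=> /allP H; exfalso; move/negP: hn; apply; apply/FP; exists l => // r hr.
  by apply: H; rewrite mem_iota add0n ltnS.
by case/allPn => r; rewrite mem_iota add0n ltnS => hr hn'; exists r.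
Qed.

Lemma bL TB xl xr p : p <= TB -> oRs TB xr p true -> outcome TB (Game xl xr) p false.
Proof.
move=> hp h; rewrite out_F; apply/FP; exists 0 => // [[|r]] hr.
  by rewrite stF_eq // addn0.
rewrite stF_lt // ; apply/andP; split; apply: oRs_Mono h; rewrite /sle /=; lia.
Qed.

Lemma C3 TB Y p : p <= TB -> outcome TB Y p false -> outcome TB (gsum Y gone) p true.
Proof.
case: Y => yl yr hp hY; have hY' := hY.
rewrite out_F in hY; case/FP: hY => l0 hl0 H.
rewrite gsum_one out_F; apply/FP; exists l0 => // r hr.
case: (ltngtP l0 r) => hlr.
- have := H r hr; rewrite stF_lt // => /andP [_ /all_In h].
  rewrite stT_lt // oRs_cat andbT; apply/all_In => g hg; apply: Dom; [lia | exact: h].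
- have := H r hr; rewrite stF_gt // => /has_In [g [hg h]].
  rewrite stT_gt //; apply/orP; right; rewrite oLs_cat; apply/orP; left; apply/has_In; exists g; split => //.
  apply: Dom => //; lia.
- rewrite stT_eq //; case: l0 hl0 H hlr => [|l0] hl0 H hlr.
    by rewrite oLs_cat /oLs has_seq1 subn0 hY' orbT.
  have := H 0 ltac:(lia); rewrite stF_gt // => /has_In [g [hg h]].
  rewrite oLs_cat; apply/orP; left; apply/has_In; exists g; split => //.
  apply: Dom => //; lia.
Qed.

Lemma C1 TB W p lm : p <= TB -> oRs TB (rightOpts W) p lm -> outcome TB (gsum W gone) p lm.
Proof.
case: W => wl wr hp h; rewrite /= in h; rewrite gsum_one out_F; apply/FP; exists 0 => // [[|r]] hr.
  case: lm h => h.
    by rewrite stT_eq // subn0 oLs_cat /oLs has_seq1 bL // orbT.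
  rewrite stF_eq // addn0 oRs_cat andbT; apply/all_In => g hg; apply: C3 => //.
  by move/all_In: h; apply.
case: lm h => h.
  rewrite stT_lt // oRs_cat andbT; apply/all_In => g hg; apply: Dom; first lia.
  by move/all_In: h => h; apply: Mono (h g hg); rewrite /sle /=; lia.
rewrite stF_lt // !oRs_cat !andbT; apply/andP; split; apply/all_In => g hg.
  by apply: Dom; [lia | move/all_In: h => h; apply: Mono (h g hg); rewrite /sle /=; lia].
by apply: (@Mono _ _ p true); [rewrite /sle /=; lia | lia | apply: C3 => //; move/all_In: h; apply].
Qed.

Lemma bR TB xl xr p : p <= TB -> ~~ oLs TB xl p false -> ~~ outcome TB (Game xl xr) p true.
Proof.
move=> hp h; rewrite out_F; apply/negP => /FP [l hl H]; move: (H 0 ltac:(lia)).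
case: l hl {H} => [|l] hl.
  by rewrite stT_eq // subn0 (negbTE h).
rewrite stT_gt // => /orP [] h'; move/negP: h; apply; apply: oLs_Mono h'; rewrite /sle /=; lia.
Qed.

Lemma C3' TB Y p : p <= TB -> ~~ outcome TB Y p true -> ~~ outcome TB (gsum Y gmone) p false.
Proof.
case: Y => yl yr hp hY; have hY' := hY.
rewrite out_F in hY; move: (FnP hY) => {}hY.
rewrite gsum_mone out_F; apply/negP => /FP [l hl H].
case: (hY l hl) => r hr; case: (ltngtP l r) => hlr.
- rewrite stT_lt // => /negP; apply; move: (H r hr); rewrite stF_lt // => /andP [_].
  rewrite oRs_cat => /andP [/all_In h _]; apply/all_In => g hg; apply: Dom' (h g hg); lia.
- rewrite stT_gt // negb_or => /andP [_ /negP]; apply.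
  move: (H r hr); rewrite stF_gt // oLs_cat orbF => /has_In [g [hg h]].
  by apply/has_In; exists g; split => //; apply: Dom' h; lia.
- rewrite stT_eq //; case: l hl H hlr => [|l] hl H hlr.
    move=> _; move: (H 0 ltac:(lia)); rewrite stF_eq // addn0 oRs_cat /oRs all_seq1.
    by case/andP => _ h; rewrite h in hY'.
  move=> /negP; apply; move: (H 0 ltac:(lia)); rewrite stF_gt // oLs_cat orbF.
  by case/has_In => g [hg h]; apply/has_In; exists g; split => //; apply: Dom' h; lia.
Qed.

Lemma C1' TB W p lm : p <= TB -> ~~ oLs TB (leftOpts W) p lm -> ~~ outcome TB (gsum W gmone) p lm.
Proof.
case: W => wl wr hp h; rewrite /= in h; rewrite gsum_mone out_F; apply/negP => /FP [l hl H].
move: (H 0 ltac:(lia)); clear H; case: lm h => h; case: l hl => [|l] hl.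
- rewrite stT_eq // subn0 oLs_cat orbF => /has_In [g [hg hg']].
  have hn : ~~ outcome TB g p true.
    by apply/negP => hg2; move/negP: h; apply; apply/has_In; exists g.
  by move: (C3' hp hn); rewrite hg'.
- rewrite stT_gt // !oLs_cat !orbF => /orP [] /has_In [g [hg hg']].
    move/negP: h; apply; apply/has_In; exists g; split => //.
    by apply: (@Mono _ _ (p - l.+1) true); [rewrite /sle /=; lia | lia | apply: Dom' hg'; lia].
  have hn : ~~ outcome TB g p true.
    by apply/negP => hg2; move/negP: h; apply; apply/has_In; exists g.
  move: (C3' hp hn) => /negP; apply; apply: Mono hg'; rewrite /sle /=; lia.
- rewrite stF_eq // addn0 oRs_cat /oRs all_seq1 => /andP [_ hW].
  by move: (bR wr hp h); rewrite hW.
- rewrite stF_gt // oLs_cat orbF => /has_In [g [hg hg']].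
  move/negP: h; apply; apply/has_In; exists g; split => //.
  by apply: (@Mono _ _ (p - l.+1) false); [rewrite /sle /=; lia | lia | apply: Dom' hg'; lia].
Qed.

Definition eqo TB A B := forall p lm, p <= TB -> outcome TB A p lm = outcome TB B p lm.

Lemma eqo_opts TB A B :
  (forall q m, q <= TB -> oLs TB (leftOpts A) q m = oLs TB (leftOpts B) q m) ->
  (forall q m, q <= TB -> oRs TB (rightOpts A) q m = oRs TB (rightOpts B) q m) ->
  eqo TB A B.
Proof.
case: A => al ar; case: B => bl br /= hL hR p lm hp; rewrite !out_F.
apply/idP/idP; apply: F_mono => // q m hq; by [rewrite hL | rewrite hR | rewrite -hL | rewrite -hR].
Qed.

Lemma has_gsumL (P : pred game) G H : has P (leftOpts (gsum G H)) =
  has (fun g => P (gsum g H)) (leftOpts G) || has (fun h => P (gsum G h)) (leftOpts H).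
Proof. by case: G => gl gr; case: H => hl hr; rewrite gsum_unfold /= has_cat !has_map. Qed.
Lemma all_gsumR (P : pred game) G H : all P (rightOpts (gsum G H)) =
  all (fun g => P (gsum g H)) (rightOpts G) && all (fun h => P (gsum G h)) (rightOpts H).
Proof. by case: G => gl gr; case: H => hl hr; rewrite gsum_unfold /= all_cat !all_map. Qed.

Lemma has_eq_In T (f g : pred T) s : (forall x, List.In x s -> f x = g x) -> has f s = has g s.
Proof.
elim: s => [|x s IH] //= H; rewrite H; last by left.
by rewrite IH // => y hy; apply: H; right.
Qed.
Lemma all_eq_In T (f g : pred T) s : (forall x, List.In x s -> f x = g x) -> all f s = all g s.
Proof.
elim: s => [|x s IH] //= H; rewrite H; last by left.
by rewrite IH // => y hy; apply: H; right.
Qed.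

Lemma gsize_opL g G : List.In g (leftOpts G) -> gsize g < gsize G.
Proof. by case: G => gl gr /=; apply: gsizeL. Qed.
Lemma gsize_opR g G : List.In g (rightOpts G) -> gsize g < gsize G.
Proof. by case: G => gl gr /=; apply: gsizeR. Qed.

Lemma swap2 TB A B C : eqo TB (gsum (gsum A B) C) (gsum (gsum A C) B).
Proof.
suff: forall n A B C, gsize A + gsize B + gsize C = n ->
  eqo TB (gsum (gsum A B) C) (gsum (gsum A C) B) by move=> H; exact: H.
elim/nat_strong => n IH {}A {}B {}C e; apply: eqo_opts => q m hq.
  rewrite /oLs !has_gsumL.
  have h1 : has (fun g => outcome TB (gsum (gsum g B) C) q m) (leftOpts A) =
            has (fun g => outcome TB (gsum (gsum g C) B) q m) (leftOpts A).
    apply: has_eq_In => a ha; apply: (IH (gsize a + gsize B + gsize C)) => //.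
    by rewrite -e; have := gsize_opL ha; lia.
  have h2 : has (fun g => outcome TB (gsum (gsum A g) C) q m) (leftOpts B) =
            has (fun g => outcome TB (gsum (gsum A C) g) q m) (leftOpts B).
    apply: has_eq_In => a ha; apply: (IH (gsize A + gsize a + gsize C)) => //.
    by rewrite -e; have := gsize_opL ha; lia.
  have h3 : has (fun g => outcome TB (gsum (gsum A B) g) q m) (leftOpts C) =
            has (fun g => outcome TB (gsum (gsum A g) B) q m) (leftOpts C).
    apply: has_eq_In => a ha; apply: (IH (gsize A + gsize B + gsize a)) => //.
    by rewrite -e; have := gsize_opL ha; lia.
  rewrite h1 h2 h3 -!orbA; congr (_ || _); apply: orbC.
rewrite /oRs !all_gsumR.
have h1 : all (fun g => outcome TB (gsum (gsum g B) C) q m) (rightOpts A) =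
          all (fun g => outcome TB (gsum (gsum g C) B) q m) (rightOpts A).
  apply: all_eq_In => a ha; apply: (IH (gsize a + gsize B + gsize C)) => //.
  by rewrite -e; have := gsize_opR ha; lia.
have h2 : all (fun g => outcome TB (gsum (gsum A g) C) q m) (rightOpts B) =
          all (fun g => outcome TB (gsum (gsum A C) g) q m) (rightOpts B).
  apply: all_eq_In => a ha; apply: (IH (gsize A + gsize a + gsize C)) => //.
  by rewrite -e; have := gsize_opR ha; lia.
have h3 : all (fun g => outcome TB (gsum (gsum A B) g) q m) (rightOpts C) =
          all (fun g => outcome TB (gsum (gsum A g) B) q m) (rightOpts C).
  apply: all_eq_In => a ha; apply: (IH (gsize A + gsize B + gsize a)) => //.
  by rewrite -e; have := gsize_opR ha; lia.
rewrite h1 h2 h3 -!andbA; congr (_ && _); apply: andbC.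
Qed.

Lemma int_left (k : int) : leftOpts (int_game k) =
  if (0 < k)%R then [:: int_game (k - 1)%R] else [::].
Proof.
case: k => [[|n]|n] //.
by have -> : (Posz n.+1 - 1)%R = Posz n by lia.
Qed.

Lemma int_right (k : int) : rightOpts (int_game k) =
  if (k < 0)%R then [:: int_game (k + 1)%R] else [::].
Proof.
case: k => [n|[|n]] //.
  by case: n.
by have -> : (Negz n.+1 + 1)%R = Negz n by lia.
Qed.

Lemma has_if (P : pred game) (b : bool) x : has P (if b then [:: x] else [::]) = b && P x.
Proof. by case: b; rewrite /= ?orbF. Qed.
Lemma all_if (P : pred game) (b : bool) x : all P (if b then [:: x] else [::]) = b ==> P x.
Proof. by case: b; rewrite /= ?andbT. Qed.

Lemma mainT TB : forall N (n m : int), (absz n + absz m)%N = N -> forall X,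
  eqo TB (gsum (gsum (int_game n) (int_game m)) X) (gsum (int_game (n + m)%R) X).
Proof.
elim/nat_strong => N IHN n m eN X.
elim/game_ind2: X => xl xr IHl IHr.
set X := Game xl xr.
apply: eqo_opts => q mk hq.
  rewrite /oLs !has_gsumL !int_left !has_if.
  set D := outcome TB (gsum (int_game (n + m - 1)%R) X) q mk.
  have -> : has (fun g => outcome TB (gsum (gsum (int_game n) (int_game m)) g) q mk) (leftOpts X)
          = has (fun g => outcome TB (gsum (int_game (n + m)%R) g) q mk) (leftOpts X).
    by apply: has_eq_In => x hx; apply: IHl.
  set T := has _ (leftOpts X).
  have -> : ((0 < n)%R && outcome TB (gsum (gsum (int_game (n - 1)%R) (int_game m)) X) q mk)
            = ((0 < n)%R && D).
    case: (boolP (0 < n)%R) => hn //=.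
    rewrite (IHN (absz (n - 1)%R + absz m)) //; last by rewrite -eN; lia.
    by have -> : (n - 1 + m)%R = (n + m - 1)%R by lia.
  have -> : ((0 < m)%R && outcome TB (gsum (gsum (int_game n) (int_game (m - 1)%R)) X) q mk)
            = ((0 < m)%R && D).
    case: (boolP (0 < m)%R) => hm //=.
    rewrite (IHN (absz n + absz (m - 1)%R)) //; last by rewrite -eN; lia.
    by have -> : (n + (m - 1))%R = (n + m - 1)%R by lia.
  have hD : (0 < n)%R || (0 < m)%R -> ~~ (0 < n + m)%R -> D -> T.
    move=> hpos hk hd.
    have e1 : outcome TB (gsum (gsum (int_game (n + m)%R) X) gmone) q mk = D.
      rewrite swap2 //.
      have := IHN (absz (n + m)%R + absz (-1)%R) _ (n + m)%R (-1)%R erefl X q mk hq.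
      by move=> -> //; rewrite -eN; lia.
    have := @C1' TB (gsum (int_game (n + m)%R) X) q mk hq.
    rewrite e1 hd /oLs has_gsumL int_left (negbTE hk) /= => h.
    by apply/negPn/negP => hn; move: (h hn).
  apply/idP/idP.
    case/orP => [/orP [/andP [hn hd] | /andP [hm hd]] | hT]; last by rewrite hT orbT.
      case: (boolP (0 < n + m)%R) => hk; first by rewrite hd.
      by apply/orP; right; apply: hD => //; rewrite hn.
    case: (boolP (0 < n + m)%R) => hk; first by rewrite hd.
    by apply/orP; right; apply: hD => //; rewrite hm orbT.
  case/orP => [/andP [hk hd] | hT]; last by rewrite hT orbT.
  by rewrite hd !andbT; apply/orP; lia.
rewrite /oRs !all_gsumR !int_right !all_if.
set U := outcome TB (gsum (int_game (n + m + 1)%R) X) q mk.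
have -> : all (fun g => outcome TB (gsum (gsum (int_game n) (int_game m)) g) q mk) (rightOpts X)
        = all (fun g => outcome TB (gsum (int_game (n + m)%R) g) q mk) (rightOpts X).
  by apply: all_eq_In => x hx; apply: IHr.
set T := all _ (rightOpts X).
have -> : ((n < 0)%R ==> outcome TB (gsum (gsum (int_game (n + 1)%R) (int_game m)) X) q mk)
          = ((n < 0)%R ==> U).
  case: (boolP (n < 0)%R) => hn //=.
  rewrite (IHN (absz (n + 1)%R + absz m)) //; last by rewrite -eN; lia.
  by have -> : (n + 1 + m)%R = (n + m + 1)%R by lia.
have -> : ((m < 0)%R ==> outcome TB (gsum (gsum (int_game n) (int_game (m + 1)%R)) X) q mk)
          = ((m < 0)%R ==> U).
  case: (boolP (m < 0)%R) => hm //=.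
  rewrite (IHN (absz n + absz (m + 1)%R)) //; last by rewrite -eN; lia.
  by have -> : (n + (m + 1))%R = (n + m + 1)%R by lia.
have hU : (n < 0)%R || (m < 0)%R -> ~~ (n + m < 0)%R -> T -> U.
  move=> hneg hk hT.
  have e1 : outcome TB (gsum (gsum (int_game (n + m)%R) X) gone) q mk = U.
    rewrite swap2 //.
    have := IHN (absz (n + m)%R + absz 1%R) _ (n + m)%R 1%R erefl X q mk hq.
    by move=> -> //; rewrite -eN; lia.
  rewrite -e1; apply: C1 => //.
  by rewrite /oRs all_gsumR int_right (negbTE hk) /=.
apply/idP/idP.
  case/andP => /andP [h1 h2] hT; rewrite hT andbT; apply/implyP => hk.
  case: (boolP (n < 0)%R) => hn; first by move/implyP: h1; apply.
  case: (boolP (m < 0)%R) => hm; first by move/implyP: h2; apply.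
  exfalso; lia.
case/andP => h hT; rewrite hT andbT.
case: (boolP (n + m < 0)%R) => hk.
  by move/implyP: h => /(_ hk) ->; rewrite !implybT.
by apply/andP; split; apply/implyP => hx; apply: hU => //; rewrite hx ?orbT.
Qed.

Theorem mainTheorem14 (TB : nat) (n m : int) :
  game_eq TB (gsum (int_game n) (int_game m)) (int_game (n + m)%R).
Proof.
split => X p lm hp; rewrite (@mainT TB _ n m erefl X p lm hp); by apply/implyP.
Qed.
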